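(* Let $S$ be a finite group that is not flat. Then there exists a semi-simple $S$-group $V$ such that $\mathrm{MaxDim}(V \rtimes S) = \mathrm{MaxDim}_S(V) + i(S)$.
   Context: All groups are finite. A subset $s$ of a group is irredundant if $\langle s \setminus \{h\}\rangle \neq \langle s \rangle$ for every $h \in s$; $m(G)$ is the maximal size of an irredundant generating set of $G$ and $i(G)$ the maximal size of an irredundant subset of $G$. $G$ is flat if $m(G) = i(G)$. A semi-simple $S$-group is a finite-dimensional vector space $V$ over a prime field $\mathbb{F}_p$ on which $S$ acts linearly, which is completely reducible (a direct sum of irreducible $\mathbb{F}_p[S]$-modules); $V \rtimes S$ is the corresponding semidirect product. A finite set $\{H_1,\dots,H_n\}$ of subgroups of $G$ is in general position if for every $1 \le j \le n$, $\bigcap_{i \neq j} H_i \supsetneq \bigcap_{i} H_i$. $\mathrm{MaxDim}(G)$ is the largest cardinality of a collection of maximal subgroups of $G$ in general position. If $S$ acts on $V$, $\mathrm{MaxDim}_S(V)$ is the largest cardinality of a collection of maximal $S$-invariant (proper) subgroups of $V$ that is in general position. *)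

(* Defs.v *)
From HB Require Import structures.
From mathcomp Require Import all_boot all_order all_algebra all_fingroup all_solvable.
From mathcomp Require Import mxrepresentation mxabelem.

Set Implicit Arguments.
Unset Strict Implicit.
Unset Printing Implicit Defensive.

Local Open Scope group_scope.

Section Defs.
Variable gT : finGroupType.

Definition irredundant (A : {set gT}) : bool :=
  [forall h in A, <<A :\ h>> != <<A>>].

Definition m_irr (G : {group gT}) : nat :=
  \max_(A : {set gT} | (<<A>> == G) && irredundant A) #|A|.

Definition i_irr (G : {group gT}) : nat :=
  \max_(A : {set gT} | (A \subset G) && irredundant A) #|A|.

Definition flat (G : {group gT}) : bool := m_irr G == i_irr G.

(* A family X of subgroups of the ambient group G is in general position if
   for every H in X, the intersection of the other members strictly contains
   the intersection of all members (intersections are taken inside G, so the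
   empty intersection is G). *)
Definition gen_pos (G : {set gT}) (X : {set {group gT}}) : bool :=
  [forall H in X,
     (G :&: \bigcap_(K in X) (K : {set gT}))
       \proper (G :&: \bigcap_(K in X | K != H) (K : {set gT}))].

Definition MaxDim (G : {set gT}) : nat :=
  \max_(X : {set {group gT}} |
          [forall H in X, maximal H G] && gen_pos G X) #|X|.
End Defs.

Definition MaxDim_inv (aT : finGroupType) (D : {set aT}) (rT : finGroupType)
    (A : {set aT}) (to : action D rT) (V : {set rT}) : nat :=
  \max_(X : {set {group rT}} |
          [forall H in X,
             [max H of K | (K \proper V) && [acts A, on K | to]]]
          && gen_pos V X) #|X|.

(* Main.v *)
Require Import Defs.
From HB Require Import structures.
From mathcomp Require Import all_boot all_order all_algebra all_fingroup all_solvable.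
From mathcomp Require Import mxrepresentation mxabelem.
From Stdlib Require Classical_Prop.

Set Implicit Arguments.
Unset Strict Implicit.
Unset Printing Implicit Defensive.

Local Open Scope group_scope.
Import GRing.Theory.



Section Generic.
Variable gT : finGroupType.
Implicit Types (G : {set gT}) (X : {set {group gT}}).

Lemma gen_posP G X :
  reflect (forall H : {group gT}, H \in X -> exists2 x, x \in G &
             (forall K : {group gT}, K \in X -> K != H -> x \in K) /\ x \notin H)
          (gen_pos G X).
Proof.
apply: (iffP forallP) => [hX H HX | hX H].
  have /implyP/(_ HX)/properP[_ [x]] := hX H.
  rewrite !inE => /andP[Gx /bigcapP xK] nx.
  exists x => //; split=> [K KX nKH|]; first by apply: xK; rewrite KX.
  apply/negP => xH; move: nx; rewrite Gx /=; apply/negP/negPn/bigcapP => K KX.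
  by case: (eqVneq K H) => [->|nKH] //; apply: xK; rewrite KX.
apply/implyP => HX; have [x Gx [xK nxH]] := hX H HX.
apply/properP; split.
  apply/subsetP => y; rewrite !inE => /andP[-> /bigcapP yK] /=.
  by apply/bigcapP => K /andP[KX _]; apply: yK.
exists x; first by rewrite inE Gx /=; apply/bigcapP => K /andP[]; apply: xK.
by rewrite inE Gx /=; apply/bigcapP => /(_ H HX); apply/negP.
Qed.

Lemma MaxDim_ge (G : {set gT}) (I : finType) (M : I -> {group gT}) (x : I -> gT) :
  (forall i, maximal (M i) G) -> (forall i, x i \in G) ->
  (forall i j, i != j -> x i \in M j) -> (forall i, x i \notin M i) ->
  #|I| <= MaxDim G.
Proof.
move=> maxM Gx xM nxM.
have injM : injective M.
  move=> i j eqij; apply/eqP; apply/negPn/negP => nij.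
  by have := xM _ _ nij; rewrite -eqij (negPf (nxM i)).
rewrite /MaxDim; set X := [set M i | i : I].
have -> : #|I| = #|X| by rewrite card_imset.
apply: (leq_bigmax_cond (F := fun X => #|X|)); apply/andP; split.
  by apply/forallP => H; apply/implyP => /imsetP[i _ ->].
apply/gen_posP => H /imsetP[i _ ->]; exists (x i) => //; split => //.
move=> K /imsetP[j _ ->] nji; apply: xM; apply: contraNneq nji => ->.
by [].
Qed.

End Generic.

Section Transport.
Variables (aT rT : finGroupType) (D : {group aT}) (f : {morphism D >-> rT}).
Hypothesis injf : 'injm f.

Lemma injm_mem (A : {set aT}) x : A \subset D -> x \in D -> (f x \in f @* A) = (x \in A).
Proof.
move=> sAD Dx; rewrite -!sub1set -morphim_set1 // injmSK //.
by rewrite sub1set.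
Qed.

Lemma injm_setD1 (A : {set aT}) a : A \subset D -> a \in D ->
  f @* (A :\ a) = f @* A :\ f a.
Proof.
move=> sAD Da; apply/setP => y; rewrite in_setD1.
apply/idP/idP => [/morphimP[x Dx Axa ->] | /andP[nya /morphimP[x Dx Ax ey]]].
  move: Axa; rewrite in_setD1 => /andP[nxa Ax]; rewrite mem_morphim // andbT.
  by apply: contra nxa => /eqP/(injmP injf x a Dx Da) ->.
rewrite ey mem_morphim // in_setD1 Ax andbT; apply: contra nya => /eqP exa.
by rewrite ey exa.
Qed.

Lemma irr_injm (A : {set aT}) : A \subset D -> irredundant (f @* A) = irredundant A.
Proof.
move=> sAD; rewrite /irredundant; apply/forall_inP/forall_inP => h a.
  move=> Aa; have Da := subsetP sAD a Aa.
  have := h (f a) (mem_morphim f Da Aa).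
  rewrite -injm_setD1 // -!morphim_gen ?(subset_trans (subD1set _ _)) //.
  by rewrite injm_eq ?gen_subG ?(subset_trans (subD1set _ _)).
case/morphimP => x Dx Ax ->; have := h x Ax.
rewrite -injm_setD1 // -!morphim_gen ?(subset_trans (subD1set _ _)) //.
by rewrite injm_eq ?gen_subG ?(subset_trans (subD1set _ _)).
Qed.

Lemma i_irr_injm (S : {group aT}) : S \subset D -> i_irr (f @* S)%G = i_irr S.
Proof.
move=> sSD; apply/eqP; rewrite eqn_leq; apply/andP; split.
  apply/bigmax_leqP => B /andP[sBS irrB].
  have sBD : B \subset f @* D by apply: subset_trans sBS (morphimS _ sSD).
  have eB := morphpreK sBD.
  have sAD : f @*^-1 B \subset D := morphpre_sub _ _.
  rewrite -eB card_injm //.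
  apply: (@leq_bigmax_cond _ (fun A : {set aT} => (A \subset S) && irredundant A) (fun A => #|A|)).
  by rewrite -(injmSK injf _ sAD) eB sBS /= -(irr_injm sAD) eB.
apply/bigmax_leqP => A /andP[sAS irrA].
have sAD := subset_trans sAS sSD.
rewrite -(card_injm injf sAD).
apply: (@leq_bigmax_cond _ (fun B : {set rT} => (B \subset (f @* S)%G) && irredundant B) (fun A => #|A|)).
by rewrite morphimS //= irr_injm.
Qed.

End Transport.


Section Abstract.
Variables (xT : finGroupType) (G V S : {group xT}).
Hypothesis defG : V ><| S = G.
Hypothesis abV : abelian V.

Let ctx := sdprod_context defG.
Lemma nsVG : V <| G. Proof. by case: ctx. Qed.
Lemma sSG : S \subset G. Proof. by case: ctx. Qed.
Lemma mulVS : V * S = G. Proof. by case: ctx. Qed.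
Lemma nVS : S \subset 'N(V). Proof. by case: ctx. Qed.
Lemma tiVS : V :&: S = 1. Proof. by case: ctx. Qed.
Lemma sVG : V \subset G. Proof. by case/andP: nsVG. Qed.

Definition vmax (W : {group xT}) :=
  [max W of K | (K \proper V) && (K <| G)].

Lemma norm_sub_abelian (K : {group xT}) :
  K \subset V -> S \subset 'N(K) -> K <| G.
Proof.
move=> sKV nKS; rewrite /normal (subset_trans sKV sVG) /= -mulVS.
by rewrite mul_subG // sub_abelian_norm.
Qed.

Lemma vmaxP (W : {group xT}) : vmax W ->
  [/\ W <| G, W \proper V & forall K : {group xT}, K <| G -> K \subset V ->
       W \subset K -> K :=: W \/ K :=: V].
Proof.
case/maxgroupP => /andP[pWV nWG] maxW; split => // K nKG sKV sWK.
have [pKV|] := boolP (K \proper V); first by left; apply: maxW => //; rewrite pKV.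
by rewrite properEneq sKV andbT negbK => /eqP ->; right.
Qed.

Lemma vmax_sub (W : {group xT}) : vmax W -> W \subset V.
Proof. by case/vmaxP => _ /proper_sub. Qed.

Lemma vmaxM (W K : {group xT}) : vmax W -> K <| G -> K \subset V ->
  ~~ (K \subset W) -> W * K = V.
Proof.
move=> mW nKG sKV nKW; have [nWG pWV maxW] := vmaxP mW.
have nWK : K \subset 'N(W) by apply: subset_trans (normal_norm nWG); case/andP: nKG.
rewrite -norm_joinEr //.
have sWKV : (W <*> K)%G \subset V by rewrite join_subG (proper_sub pWV).
have [eq|->] // := maxW (W <*> K)%G (normalY nWG nKG) sWKV (joing_subl _ _).
by case/negP: nKW; rewrite -[W : {set xT}]eq joing_subr.
Qed.

Lemma compl_vmax (P Z : {group xT}) :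
  mingroup P (fun K : {group xT} => (K :!=: 1) && (K <| G)) ->
  Z <| G -> P :&: Z = 1 -> P * Z = V -> vmax Z.
Proof.
case/mingroupP => /andP[ntP nPG] minP nZG tiPZ defV.
have sZV : Z \subset V by rewrite -defV mulG_subr.
have sPV : P \subset V by rewrite -defV mulG_subl.
apply/maxgroupP; split.
  rewrite nZG andbT properEneq sZV andbT; apply: contra ntP => /eqP eZV.
  by rewrite -subG1 -tiPZ subsetI subxx eZV.
move=> K /andP[pKV nKG] sZK.
have [trivKP|ntKP] := eqVneq (K :&: P) 1.
  apply/eqP; rewrite eq_sym eqEsubset sZK /=.
  have: (K :&: P) * Z = K :&: (P * Z) by rewrite group_modr.
  by rewrite trivKP mul1g defV (setIidPl (proper_sub pKV)) => ->.
have eKP : K :&: P :=: P.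
  apply: minP; last exact: subsetIr.
  by rewrite ntKP /=; apply: normalI.
by case/negP: (proper_subn pKV); rewrite -defV mul_subG // -eKP subsetIl.
Qed.

Lemma memWS (W : {group xT}) v s : W \subset V -> v \in V -> s \in S ->
  (v * s \in W * S) = (v \in W).
Proof.
move=> sWV Vv Ss; apply/idP/idP => [|Wv]; last exact: mem_mulg.
case/mulsgP => w t Ww St evs.
have Vwv : w^-1 * v \in V by apply: groupM => //; rewrite groupV (subsetP sWV).
have ewv : w^-1 * v = t * s^-1 by rewrite -(mulgK s v) evs -mulgA mulKg.
have Swv : w^-1 * v \in S by rewrite ewv; apply: groupM; rewrite ?groupV.
have : w^-1 * v \in V :&: S by rewrite inE Vwv.
by rewrite tiVS inE -(inj_eq (mulgI w)) mulg1 mulKVg => /eqP ->.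
Qed.

Definition dd (b s : xT) := b * s * b^-1 * s^-1.

Lemma dd_in (K : {group xT}) b s : K <| G -> b \in K -> s \in G -> dd b s \in K.
Proof.
move=> nKG Kb Gs.
have -> : dd b s = b * (b^-1 ^ s^-1) by rewrite /dd /conjg invgK !mulgA.
apply: groupM => //; rewrite memJ_norm ?groupV //; last first.
by apply: (subsetP (normal_norm nKG)); rewrite ?groupV.
Qed.

Lemma memM (W : {group xT}) b v s : W \subset V -> b \in V -> v \in V -> s \in S ->
  (v * s \in (W * S) :^ b) = (v * dd b s \in W).
Proof.
move=> sWV Vb Vv Ss; rewrite mem_conjg.
have Gs : s \in G by apply: (subsetP sSG).
have -> : (v * s) ^ b^-1 = (v * dd b s) * s.
  rewrite /conjg invgK /dd.
  have cbv : commute b v by apply: (centsP abV).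
  by rewrite !mulgA cbv mulgKV.
by rewrite memWS // groupM // (dd_in nsVG).
Qed.

Lemma maxWS (W : {group xT}) : vmax W -> maximal (W <*> S) G.
Proof.
move=> mW; have [nWG pWV maxW] := vmaxP mW; have sWV := proper_sub pWV.
have nWS : S \subset 'N(W) by apply: subset_trans sSG (normal_norm nWG).
have eWS : W <*> S = W * S :> {set xT} by rewrite norm_joinEr.
have capWS : W * S :&: V = W.
  by rewrite -group_modl // setIC tiVS mulg1.
apply/maxgroupP; split.
  rewrite properEneq join_subG (subset_trans sWV sVG) sSG andbT /= eWS andbT.
  apply: contra (proper_subn pWV) => /eqP eG.
  by rewrite -capWS eG (setIidPr sVG).
move=> K /andP[sKG nGK] sWSK.
have sSK : S \subset K by apply: subset_trans sWSK; apply: joing_subr.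
have nKV : (K :&: V)%G <| G.
  apply: norm_sub_abelian; first exact: subsetIr.
  by apply: normsI; [apply: subset_trans sSK (normG K) | exact: nVS].
have sWKV : W \subset K :&: V.
  by rewrite subsetI sWV andbT; apply: subset_trans sWSK; apply: joing_subl.
have defK : (K :&: V) * S = K by rewrite group_modr // mulVS (setIidPl sKG).
have [eW|eV] := maxW _ nKV (subsetIr _ _) sWKV.
  by apply/eqP; rewrite eqEsubset sWSK andbT /= eWS -defK eW.
by case/negP: nGK; rewrite -defK eV mulVS.
Qed.


Section Ell.
Variable ws : seq {group xT}.
Hypothesis wsmax : forall W, W \in ws -> vmax W.
Let c := size ws.

Definition Fs (t : nat) : {group xT} :=
  (V :&: \bigcap_(W : {group xT} | W \in take t ws) W)%G.
Hypothesis wscap : Fs c :=: 1.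

Definition Ws (t : nat) : {group xT} := nth 1%G ws t.

Lemma Fs0 : Fs 0 :=: V.
Proof. by rewrite /Fs /= take0 big_pred0 // setIT. Qed.

Lemma FsS t : t < c -> Fs t.+1 :=: Fs t :&: Ws t.
Proof.
move=> tc; rewrite /Fs /= (take_nth 1%G tc) -setIA; congr (_ :&: _).
apply/setP => x; rewrite inE; apply/bigcapP/andP => [xI|[/bigcapP xI xW] W].
  split; first by apply/bigcapP => W WI; apply: xI; rewrite mem_rcons in_cons WI orbT.
  by apply: xI; rewrite mem_rcons mem_head.
by rewrite mem_rcons in_cons => /orP[/eqP ->|]; [apply: xW | apply: xI].
Qed.

Lemma Fs_normal t : Fs t <| G.
Proof.
rewrite /normal /= (subset_trans (subsetIl _ _) sVG) /=.
rewrite normsI ?(normal_norm nsVG) //; apply: norms_bigcap; apply/bigcapsP => W.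
move/mem_take => /wsmax /vmaxP[nWG _ _]; exact: normal_norm.
Qed.

Lemma Fs_sub t : Fs t \subset V. Proof. exact: subsetIl. Qed.

Lemma Ws_max t : t < c -> vmax (Ws t).
Proof. by move=> tc; apply: wsmax; rewrite mem_nth. Qed.

Definition ell (C : {set xT}) := #|[set t : 'I_c | ~~ (C :&: Fs t \subset Ws t)]|.

Lemma ell_le C : ell C <= c.
Proof. by rewrite /ell (leq_trans (max_card _)) // card_ord. Qed.

Lemma ell_lt (B C : {group xT}) : B <| G -> C <| G -> C \subset V ->
  B \proper C -> ell B < ell C.
Proof.
move=> nBG nCG sCV pBC; have sBC := proper_sub pBC.
set T := [set t : 'I_c.+1 | C :&: Fs t != B :&: Fs t].
have T0 : (ord0 : 'I_c.+1) \in T.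
  rewrite inE Fs0 (setIidPl sCV) (setIidPl (subset_trans sBC sCV)).
  by rewrite eq_sym (proper_neq pBC).
case: (arg_maxnP (fun t : 'I_c.+1 => val t) T0) => j Tj0 maxj0.
have Tj : j \in T := Tj0.
have maxj : forall i : 'I_c.+1, i \in T -> i <= j := maxj0.
clear Tj0 maxj0.
have jc : j < c.
  rewrite ltn_neqAle -ltnS ltn_ord andbT; apply: contraTneq Tj => ej.
  by rewrite /T inE ej negbK wscap !(setIidPr (sub1G _)).
have eq1 : C :&: Fs j.+1 = B :&: Fs j.+1.
  have jS : j.+1 < c.+1 by [].
  have : ~~ (Ordinal jS \in T) by apply/negP => /maxj; rewrite /= ltnn.
  by rewrite /T inE negbK => /eqP.
have nBj : (B :&: Fs j)%G <| G by apply: normalI => //; apply: Fs_normal.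
have nCj : (C :&: Fs j)%G <| G by apply: normalI => //; apply: Fs_normal.
have sBCj : B :&: Fs j \subset C :&: Fs j by apply: setSI.
have mW := Ws_max jc.
have sBjW : B :&: Fs j \subset Ws j.
  apply/negPn/negP => nBjW.
  have eV := vmaxM mW nBj (subset_trans (subsetIr _ _) (Fs_sub _)) nBjW.
  have : (B :&: Fs j) * (Ws j :&: (C :&: Fs j)) = (B :&: Fs j) * Ws j :&: (C :&: Fs j).
    by rewrite group_modl.
  have -> : (B :&: Fs j) * Ws j = V.
    rewrite -eV; apply: normC; case/vmaxP: mW => nWG _ _.
    by apply: subset_trans (normal_norm nWG); case/andP: nBj.
  rewrite (setIidPr (subset_trans (subsetIr _ _) (Fs_sub _))).
  have -> : Ws j :&: (C :&: Fs j) = B :&: Fs j.+1.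
    by rewrite -eq1 (FsS jc) setIC -setIA.
  move=> eC; move: Tj; rewrite inE -eC; apply/negP; rewrite negbK eqEsubset.
  rewrite mulG_subl andbT mul_subG //; apply: setIS; rewrite (FsS jc); exact: subsetIl.
have nCjW : ~~ (C :&: Fs j \subset Ws j).
  apply: contraL Tj => sCjW; rewrite /T inE negbK; apply/eqP.
  have eC : C :&: Fs j :&: Ws j = C :&: Fs j.+1 by rewrite (FsS jc) setIA.
  have eB : B :&: Fs j :&: Ws j = B :&: Fs j.+1 by rewrite (FsS jc) setIA.
  by rewrite -(setIidPl sCjW) -(setIidPl sBjW) eC eB eq1.
rewrite /ell; apply: proper_card; apply/properP; split.
  apply/subsetP => t; rewrite !inE; apply: contra => sCt.
  exact: subset_trans (setSI _ sBC) sCt.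
exists (Ordinal jc); rewrite !inE ?nCjW //=.
by rewrite negbK.
Qed.

End Ell.

Lemma capV_normal (P : pred {group xT}) :
  (forall K : {group xT}, P K -> K <| G) ->
  (V :&: \bigcap_(K : {group xT} | P K) K)%G <| G.
Proof.
move=> nP; rewrite /normal /= (subset_trans (subsetIl _ _) sVG) /=.
rewrite normsI ?(normal_norm nsVG) //; apply: norms_bigcap; apply/bigcapsP => W.
by move/nP/normal_norm.
Qed.

Lemma gen_pos_sub (U : {set xT}) (Y : {set {group xT}}) (M : {group xT}) :
  gen_pos U Y -> gen_pos U (Y :\ M).
Proof.
move/gen_posP => gY; apply/gen_posP => H; rewrite in_setD1 => /andP[_ HY].
have [x Ux [xK nxH]] := gY H HY; exists x => //; split => // K.
by rewrite in_setD1 => /andP[_]; apply: xK.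
Qed.

Lemma gp_bound (ws : seq {group xT}) (Y : {set {group xT}}) :
  (forall W, W \in ws -> vmax W) -> Fs ws (size ws) :=: 1 ->
  (forall K : {group xT}, K \in Y -> K <| G /\ K \subset V) -> gen_pos V Y ->
  ell ws (V :&: \bigcap_(K in Y) K) + #|Y| <= ell ws V.
Proof.
move=> wsmax wscap.
have [m leYm] := ubnP #|Y|; elim: m Y leYm => // m IH Y leYm hY gY.
have [->|[M MY]] := set_0Vmem Y.
  by rewrite big_set0 setIT cards0 addn0.
have gY' := gen_pos_sub M gY.
have hY' : forall K : {group xT}, K \in Y :\ M -> K <| G /\ K \subset V.
  by move=> K; rewrite in_setD1 => /andP[_]; apply: hY.
have leY' : #|Y :\ M| < m by rewrite -ltnS (leq_trans _ leYm) // ltnS (cardsD1 M Y) MY.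
have := IH _ leY' hY' gY'; apply: leq_trans.
rewrite (cardsD1 M Y) MY add1n addnS ltn_add2r.
have nY := capV_normal (P := fun K => K \in Y) (fun K KY => (hY K KY).1).
have nY' := capV_normal (P := fun K => K \in Y :\ M) (fun K KY => (hY' K KY).1).
apply: (ell_lt wsmax wscap nY nY') => /=; first exact: subsetIl.
have e : \bigcap_(K in Y :\ M) K = \bigcap_(K in Y | K != M) (K : {set xT}).
  by apply: eq_bigl => K; rewrite in_setD1 andbC.
by rewrite e; move/forallP: gY => /(_ M) /implyP /(_ MY).
Qed.

Lemma gp_bound_size (ws : seq {group xT}) (Y : {set {group xT}}) :
  (forall W, W \in ws -> vmax W) -> Fs ws (size ws) :=: 1 ->
  (forall K : {group xT}, K \in Y -> K <| G /\ K \subset V) -> gen_pos V Y ->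
  #|Y| <= size ws.
Proof.
move=> wsmax wscap hY gY; apply: leq_trans (ell_le ws V).
by apply: leq_trans (gp_bound wsmax wscap hY gY); apply: leq_addl.
Qed.

Lemma remgr_ker x : x \in G -> remgr V S x = 1 -> x \in V.
Proof.
move=> Gx e; rewrite (divgr_eq V S x) e mulg1 mem_divgr //.
by rewrite mulVS.
Qed.

Lemma upper_bound (ws : seq {group xT}) :
  (forall W, W \in ws -> vmax W) -> Fs ws (size ws) :=: 1 ->
  MaxDim G <= size ws + i_irr S.
Proof.
move=> wsmax wscap; rewrite /MaxDim; apply/bigmax_leqP => X /andP[/forallP maxX gX].
have maxXP : forall M : {group xT}, M \in X -> maximal M G.
  by move=> M MX; have /implyP := maxX M; apply.
pose D := V :&: \bigcap_(M in X) (M : {set xT}).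
pose PY (Y : {set {group xT}}) := (Y \subset X) && (V :&: \bigcap_(M in Y) (M : {set xT}) == D).
have PX : PY X by rewrite /PY subxx eqxx.
case: (@arg_minnP _ X PY (fun Y => #|Y|) PX) => Y PY0 minY0.
have /andP[sYX /eqP eD] : PY Y := PY0.
have minY : forall Y', PY Y' -> #|Y| <= #|Y'| := minY0.
clear PY0 minY0.
have witY : forall M : {group xT}, M \in Y -> exists2 x, x \in V &
    (forall N : {group xT}, N \in Y -> N != M -> x \in N) /\ x \notin M.
  move=> M MY.
  have nP : ~~ PY (Y :\ M).
    apply/negP => /minY; rewrite (cardsD1 M Y) MY add1n ltnn //.
  have sD : D \subset V :&: \bigcap_(N in Y :\ M) (N : {set xT}).
    rewrite -eD setIS //; apply/bigcapsP => N; rewrite in_setD1 => /andP[_ NY].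
    exact: bigcap_inf.
  have : D != V :&: \bigcap_(N in Y :\ M) (N : {set xT}).
    apply: contra nP => /eqP eq; rewrite /PY -eq eqxx andbT.
    by apply: subset_trans sYX; apply: subD1set.
  rewrite eqEsubset sD /= => /subsetPn[x]; rewrite inE => /andP[Vx /bigcapP xN] nxD.
  exists x => //; split.
    by move=> N NY nNM; apply: xN; rewrite in_setD1 nNM.
  apply: contra nxD => xM; rewrite -eD inE Vx /=; apply/bigcapP => N NY.
  by case: (eqVneq N M) => [->|nNM] //; apply: xN; rewrite in_setD1 nNM.
pose Y' := [set (V :&: M)%G | M in Y].
have injY : {in Y &, injective (fun M : {group xT} => (V :&: M)%G)}.
  move=> M N MY NY /= e; apply/eqP; apply/negPn/negP => nMN.
  have [x Vx [xN nxM]] := witY M MY.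
  have : x \in V :&: N by rewrite inE Vx xN // eq_sym.
  by move/(congr1 val): e => /= <-; rewrite inE (negPf nxM) andbF.
have cY : #|Y'| = #|Y| by rewrite card_in_imset.
have hY' : forall K : {group xT}, K \in Y' -> K <| G /\ K \subset V.
  move=> K /imsetP[M MY ->]; split; last exact: subsetIl.
  have [x Vx [_ nxM]] := witY M MY.
  have mM := maxXP M (subsetP sYX M MY).
  have sMG : M \subset G by case/maxgroupP: mM => /proper_sub.
  have nVM : M \subset 'N(V) := subset_trans sMG (normal_norm nsVG).
  have eG : M <*> V = G.
    case/maxgroupP: mM => _ maxM.
    have sJG : M <*> V \subset G by rewrite join_subG sMG sVG.
    have [pJG|] := boolP ((M <*> V)%G \proper G).
      have eJ := maxM _ pJG (joing_subl _ _).
      by case/negP: nxM; rewrite -[M : {set xT}]eJ (subsetP (joing_subr _ _)).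
    by rewrite properEneq sJG andbT negbK => /eqP.
  rewrite /normal /= (subset_trans (subsetIl _ _) sVG) -eG join_subG.
  by rewrite normsI ?normG // sub_abelian_norm ?subsetIl //.
have gY' : gen_pos V Y'.
  apply/gen_posP => H /imsetP[M MY ->].
  have [x Vx [xN nxM]] := witY M MY.
  exists x => //; split; last by rewrite inE (negPf nxM) andbF.
  move=> K /imsetP[N NY ->] nNM; rewrite inE Vx xN //.
  by apply: contraNneq nNM => ->.
have leY : #|Y| <= size ws by rewrite -cY; apply: gp_bound_size wsmax wscap hY' gY'.
have wX : forall M : {group xT}, M \in X -> exists2 x, x \in G &
    (forall K : {group xT}, K \in X -> K != M -> x \in K) /\ x \notin M.
  by move/gen_posP: gX.
pose wx (M : {group xT}) := odflt 1 [pick x in G |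
   [forall K in X, (K != M) ==> (x \in (K : {set xT}))] && (x \notin M)].
have wxP : forall M : {group xT}, M \in X ->
    [/\ wx M \in G, (forall K : {group xT}, K \in X -> K != M -> wx M \in K) &
        wx M \notin M].
  move=> M MX; rewrite /wx; case: pickP => [x /andP[Gx /andP[/forall_inP xK nxM]]|].
    by split => // K KX nKM; have /implyP := xK K KX; apply.
  have [x Gx [xK nxM]] := wX M MX.
  move/(_ x); rewrite Gx nxM andbT /=; move/negbT/negP; case.
  by apply/forall_inP => K KX; apply/implyP; apply: xK.
have cplS : S \in [complements to V in G] by apply/complP; split; [apply: tiVS | apply: mulVS].
have piM : {in G &, {morph remgr V S : x y / x * y}} := remgrM cplS nsVG.
pose pim : {morphism G >-> xT} := Morphism piM.
pose Z := X :\: Y.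
have key : forall M : {group xT}, M \in Z ->
    remgr V S (wx M) \notin <<[set remgr V S (wx N) | N in Z :\ M]>>.
  move=> M; rewrite inE => /andP[nMY MX].
  have [GxM xMK nxM] := wxP M MX.
  pose B := [set wx N | N in Z :\ M].
  have sBG : B \subset G.
    by apply/subsetP => y /imsetP[N]; rewrite !inE => /and3P[_ _ NX] ->; case: (wxP N NX).
  have eB : [set remgr V S (wx N) | N in Z :\ M] = pim @* B.
    rewrite /morphim (setIidPr sBG) -imset_comp; apply: eq_imset => N //.
  rewrite eB -morphim_gen //; apply/negP => /morphimP[b Gb Bb /= eb].
  have sBM : <<B>> \subset M.
    rewrite gen_subG; apply/subsetP => y /imsetP[N]; rewrite !inE => /and3P[nNM _ NX] ->.
    by case: (wxP N NX) => _ xK _; apply: xK => //; rewrite eq_sym.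
  have sBL : <<B>> \subset \bigcap_(K in Y) K.
    rewrite gen_subG; apply/subsetP => y /imsetP[N]; rewrite !inE => /and3P[_ nNY NX] ->.
    case: (wxP N NX) => _ xK _; apply/bigcapP => K KY; apply: xK.
      exact: (subsetP sYX).
    by apply: contraNneq nNY => <-.
  have xML : wx M \in \bigcap_(K in Y) K.
    apply/bigcapP => K KY; apply: xMK; first exact: (subsetP sYX).
    by apply: contraNneq nMY => <-.
  have Vv : b^-1 * wx M \in V.
    apply: remgr_ker; first by rewrite groupM ?groupV.
    by rewrite piM ?groupV // eb -piM ?groupV // mulVg remgr1.
  have Dv : b^-1 * wx M \in D.
    rewrite -eD inE Vv /= groupM ?groupV //.
    by apply: (subsetP sBL).
  have Mv : b^-1 * wx M \in M.
    by apply: (subsetP (bigcap_inf M MX)); move: Dv; rewrite inE => /andP[].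
  case/negP: nxM; rewrite -(mulKVg b (wx M)) groupM //.
  exact: (subsetP sBM).
pose A := [set remgr V S (wx M) | M in Z].
have injA : {in Z &, injective (fun M => remgr V S (wx M))}.
  move=> M N MZ NZ e; apply/eqP; apply/negPn/negP => nMN.
  case/negP: (key M MZ); rewrite e; apply: mem_gen; apply/imsetP; exists N => //.
  by rewrite in_setD1 eq_sym nMN.
have cZ : #|A| = #|Z| by rewrite card_in_imset.
have sAS : A \subset S.
  apply/subsetP => y /imsetP[M]; rewrite inE => /andP[_ MX] ->.
  by rewrite mem_remgr // mulVS; case: (wxP M MX).
have irrA : irredundant A.
  apply/forall_inP => y /imsetP[M MZ ->].
  apply: contra (key M MZ) => /eqP eA.
  have : remgr V S (wx M) \in <<A>> by apply: mem_gen; apply: imset_f.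
  rewrite -eA; apply: subsetP; apply: genS; apply/subsetP => h; rewrite !inE.
  case/andP => nh /imsetP[N NZ eh]; apply/imsetP; exists N => //.
  by rewrite in_setD1 NZ andbT; apply: contraNneq nh => eNM; rewrite eh eNM.
have leZ : #|Z| <= i_irr S.
  rewrite -cZ /i_irr; apply: (@leq_bigmax_cond _ (fun B : {set xT} => (B \subset S) && irredundant B) (fun B => #|B|) A); by rewrite sAS irrA.
rewrite -(cardsID Y X) (setIidPr sYX); exact: leq_add.
Qed.

Section Construct.
Hypothesis Maschke : forall K : {group xT}, K <| G -> K \subset V ->
  exists L : {group xT}, [/\ L <| G, L \subset V, K :&: L = 1 & K * L = V].

Lemma capX_normal (X : {set {group xT}}) :
  (forall W, W \in X -> vmax W) -> (V :&: \bigcap_(W in X) W)%G <| G.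
Proof. by move=> hX; apply: capV_normal => K /hX /vmaxP[]. Qed.

Lemma extend (X : {set {group xT}}) :
  (forall W, W \in X -> vmax W) -> gen_pos V X ->
  exists X' : {set {group xT}}, [/\ X \subset X', forall W, W \in X' -> vmax W,
     gen_pos V X' & V :&: \bigcap_(W in X') W = 1].
Proof.
have [m le] := ubnP #|V :&: \bigcap_(W in X) (W : {set xT})|.
elim: m X le => // m IH X le hX gX.
have nDG := capX_normal hX.
set D := (V :&: \bigcap_(W in X) W)%G in nDG.
have [D1|ntD] := eqVneq (D : {set xT}) 1.
  by exists X; split.
have gPD : (D :!=: 1) && (D <| G) by rewrite ntD.
have [P minP sPD] := @mingroup_exists _ (fun K : {group xT} => (K :!=: 1) && (K <| G)) D gPD.
have /mingroupP[/andP[ntP nPG] _] := minP.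
have sDV : D \subset V := subsetIl _ _.
have [Z [nZG sZV tiPZ defV]] := Maschke nPG (subset_trans sPD sDV).
have mZ := compl_vmax minP nZG tiPZ defV.
have [p Pp ntp] := trivgPn _ ntP.
have Dp : p \in D := subsetP sPD p Pp.
have npZ : p \notin Z.
  apply: contra ntp => Zp; have : p \in P :&: Z by rewrite inE Pp.
  by rewrite tiPZ inE.
have DK : forall K : {group xT}, K \in X -> D \subset K.
  by move=> K KX; apply: subset_trans (subsetIr _ _) (bigcap_inf K KX).
have nZX : Z \notin X by apply: contra npZ => ZX; apply: (subsetP (DK Z ZX)).
set X2 := Z |: X.
have hX2 : forall W, W \in X2 -> vmax W.
  by move=> W; rewrite in_setU1 => /orP[/eqP ->|/hX].
have gX2 : gen_pos V X2.
  apply/gen_posP => H; rewrite in_setU1 => /orP[/eqP ->|HX].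
    exists p; first exact: (subsetP sDV).
    split => // K; rewrite in_setU1 => /orP[/eqP ->|KX _]; first by rewrite eqxx.
    exact: (subsetP (DK K KX)).
  have [x Vx [xK nxH]] := gen_posP _ _ gX H HX.
  move: Vx; rewrite -defV => /mulsgP[q z Pq Zz exz].
  have Dq : q \in D := subsetP sPD q Pq.
  have ez : z = q^-1 * x by rewrite exz mulKg.
  exists z; first by rewrite -[z]mul1g mem_mulg.
  split.
    move=> K; rewrite in_setU1 => /orP[/eqP -> //|KX nKH].
    by rewrite ez groupM ?groupV ?xK // (subsetP (DK K KX)).
  apply: contra nxH => zH; rewrite exz groupM //.
  exact: (subsetP (DK H HX)).
have lt : #|V :&: \bigcap_(W in X2) (W : {set xT})| < m.
  have le' : #|V :&: \bigcap_(W in X) (W : {set xT})| <= m := le.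
  apply: (leq_trans _ le'); apply: proper_card; apply/properP; split.
    rewrite setIS //; apply/bigcapsP => W WX; apply: bigcap_inf.
    by rewrite in_setU1 WX orbT.
  exists p; first exact: Dp.
  rewrite inE negb_and; apply/orP; right; apply/bigcapP => /(_ Z).
  by rewrite in_setU1 eqxx => /(_ isT); apply/negP.
have [X' [sX2X' hX' gX' cX']] := IH X2 lt hX2 gX2.
exists X'; split => //; apply: subset_trans sX2X'; exact: subsetUr.
Qed.


Section Nice.
Variable k : nat.
Variables (s b : 'I_k -> xT) (R R' : 'I_k -> {group xT}).
Hypothesis sS : forall j, s j \in S.
Hypothesis nR : forall j, R j <| G.
Hypothesis nR' : forall j, R' j <| G.
Hypothesis sRV : forall j, R j \subset V.
Hypothesis sR'V : forall j, R' j \subset V.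
Hypothesis tiRR' : forall j, R j :&: R' j = 1.
Hypothesis sRR' : forall i j, i != j -> R i \subset R' j.
Hypothesis bR : forall j, b j \in R j.
Hypothesis dd1 : forall i j, i != j -> dd (b j) (s i) = 1.
Hypothesis dd_nt : forall j, dd (b j) (s j) != 1.

Definition niceP j (W : {group xT}) :=
  [&& vmax W, dd (b j) (s j) \notin W, R' j \subset W & ~~ (R j \subset W)].

Lemma nice_exists j : exists W, niceP j W.
Proof.
set c := dd (b j) (s j).
have Gs : s j \in G := subsetP sSG _ (sS j).
have Rc : c \in R j by apply: dd_in.
pose NC := (V :&: \bigcap_(K : {group xT} | (K <| G) && (c \in K)) K)%G.
have nNC : NC <| G by apply: capV_normal => K /andP[].
have NCc : c \in NC.
  by rewrite inE (subsetP (sRV j)) //=; apply/bigcapP => K /andP[].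
have NCsub : forall K : {group xT}, K <| G -> c \in K -> NC \subset K.
  by move=> K nKG cK; apply: subset_trans (subsetIr _ _) (bigcap_inf K _); rewrite nKG.
have gPNC : (NC :!=: 1) && (NC <| G).
  rewrite nNC andbT; apply/trivgPn; exists c => //; exact: dd_nt.
have [P minP sPNC] := @mingroup_exists _ (fun K : {group xT} => (K :!=: 1) && (K <| G)) NC gPNC.
have /mingroupP[/andP[ntP nPG] _] := minP.
have sPR : P \subset R j := subset_trans sPNC (NCsub _ (nR j) Rc).
have nT : (P <*> R' j)%G <| G by apply: normalY.
have sTV : (P <*> R' j)%G \subset V by rewrite join_subG (subset_trans sPR (sRV j)) sR'V.
have [U [nUG sUV tiTU defV]] := Maschke nT sTV.
have eT : P <*> R' j = P * R' j.
  by rewrite norm_joinEr // (subset_trans (normal_sub (nR' j)) (normal_norm nPG)).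
have eW : R' j <*> U = R' j * U.
  by rewrite norm_joinEr // (subset_trans (normal_sub nUG) (normal_norm (nR' j))).
set W := (R' j <*> U)%G.
have defV' : P * W = V by rewrite /= eW mulgA -eT.
have tiPW : P :&: W = 1.
  apply/trivgP/subsetP => x; rewrite inE => /andP[Px]; rewrite /= eW.
  case/mulsgP => r u R'r Uu exru.
  have Tu : u \in P <*> R' j.
    rewrite -(mulKg r u) -exru; apply: groupM.
      by rewrite groupV; apply: (subsetP (joing_subr _ _)).
    exact: (subsetP (joing_subl _ _)).
  have u1 : u = 1.
    have : u \in (P <*> R' j) :&: U by rewrite inE Tu.
    by rewrite tiTU => /set1P.
  have : x \in R j :&: R' j.
    by rewrite inE (subsetP sPR) //= exru u1 mulg1.
  by rewrite tiRR'.
have nWG : W <| G by apply: normalY.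
have mW := compl_vmax minP nWG tiPW defV'.
exists W; apply/and4P; split => //.
- apply/negP => cW; have sPW : P \subset W.
    by apply: subset_trans sPNC (NCsub _ nWG cW).
  by case/negP: ntP; rewrite -subG1 -tiPW subsetI subxx.
- exact: joing_subl.
- apply/negP => sRW; case/negP: ntP; rewrite -subG1 -tiPW subsetI subxx.
  exact: subset_trans sPR sRW.
Qed.

Definition Wn j : {group xT} := odflt 1%G [pick W | niceP j W].

Lemma WnP j : niceP j (Wn j).
Proof.
rewrite /Wn; case: pickP => [W //|none].
by have [W] := nice_exists j; rewrite none.
Qed.

Lemma Wn_max j : vmax (Wn j). Proof. by case/and4P: (WnP j). Qed.
Lemma Wn_c j : dd (b j) (s j) \notin Wn j. Proof. by case/and4P: (WnP j). Qed.
Lemma Wn_R' j : R' j \subset Wn j. Proof. by case/and4P: (WnP j). Qed.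
Lemma Wn_R j : ~~ (R j \subset Wn j). Proof. by case/and4P: (WnP j). Qed.

Lemma Wn_inj : injective Wn.
Proof.
move=> i j eij; apply/eqP; apply/negPn/negP => nij.
case/negP: (Wn_R i); rewrite eij; apply: subset_trans (Wn_R' j).
exact: sRR'.
Qed.

Lemma nice_family : exists X : {set {group xT}},
  [/\ forall W, W \in X -> vmax W, gen_pos V X,
      V :&: \bigcap_(W in X) W = 1 & forall j, Wn j \in X].
Proof.
pose X0 := [set Wn j | j : 'I_k].
have hX0 : forall W, W \in X0 -> vmax W by move=> W /imsetP[j _ ->]; apply: Wn_max.
have gX0 : gen_pos V X0.
  apply/gen_posP => H /imsetP[t _ ->].
  have [x Rx nx] := subsetPn (Wn_R t).
  exists x; first exact: (subsetP (sRV t)).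
  split => // K /imsetP[i _ ->] nit.
  have nit' : t != i by apply: contraNneq nit => ->.
  exact: (subsetP (Wn_R' i)) (subsetP (sRR' nit') x Rx).
have [X [sX0X hX gX cX]] := extend hX0 gX0.
exists X; split => // j; apply: (subsetP sX0X); exact: imset_f.
Qed.


Lemma memJS (W : {group xT}) v t : vmax W -> v \in V -> t \in S ->
  (v * t \in (W <*> S)%G) = (v \in W).
Proof.
move=> mW Vv St; have [nWG pWV _] := vmaxP mW.
rewrite /= norm_joinEr; last exact: subset_trans sSG (normal_norm nWG).
exact: memWS (proper_sub pWV) Vv St.
Qed.

Lemma memJSb (W : {group xT}) c v t : vmax W -> c \in V -> v \in V -> t \in S ->
  (v * t \in ((W <*> S) :^ c)%G) = (v * dd c t \in W).
Proof.
move=> mW Vc Vv St; have [nWG pWV _] := vmaxP mW.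
rewrite /= norm_joinEr; last exact: subset_trans sSG (normal_norm nWG).
exact: memM (proper_sub pWV) Vc Vv St.
Qed.

Lemma dd_g1 c : dd c 1 = 1.
Proof. by rewrite /dd mulg1 invg1 mulg1 mulgV. Qed.

Lemma bV j : b j \in V. Proof. exact: (subsetP (sRV j)). Qed.

Lemma lower_bound (X : {set {group xT}}) :
  (forall W, W \in X -> vmax W) -> gen_pos V X -> (forall j, Wn j \in X) ->
  #|X| + k <= MaxDim G.
Proof.
move=> hX gX WnX.
pose I := ({W : {group xT} | W \in X} + 'I_k)%type.
pose M (i : I) : {group xT} := match i with
  | inl W => (val W <*> S)%G
  | inr j => ((Wn j <*> S) :^ b j)%G end.
pose jW (W : {group xT}) := [pick j | Wn j == W].
pose Pv (W : {group xT}) v := [&& v \in V,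
   [forall K in X, (K != W) ==> (v \in (K : {set xT}))],
   (if jW W is Some j then v * dd (b j) (s j) \in W else true) & v \notin W].
have exPv : forall W, W \in X -> exists v, Pv W v.
  move=> W WX; have mW := hX W WX.
  pose E := (V :&: \bigcap_(K : {group xT} | (K \in X) && (K != W)) K)%G.
  have nEG : E <| G by apply: capV_normal => K /andP[/hX /vmaxP[]].
  have [x Vx [xK nxW]] := gen_posP _ _ gX W WX.
  have Ex : x \in E by rewrite inE Vx /=; apply/bigcapP => K /andP[]; apply: xK.
  have nEW : ~~ (E \subset W) by apply/negP => /subsetP /(_ x Ex); apply/negP.
  have EK : forall v, v \in E -> [forall K in X, (K != W) ==> (v \in (K : {set xT}))].
    move=> v; rewrite inE => /andP[_ /bigcapP vK]; apply/forall_inP => K KX.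
    by apply/implyP => nKW; apply: vK; rewrite KX.
  rewrite /Pv; case eJ: (jW W) => [j|].
    have /eqP ejW : Wn j == W by move: eJ; rewrite /jW; case: pickP => // j' h [<-].
    set c := dd (b j) (s j).
    have Vc : c \in V := dd_in nsVG (bV j) (subsetP sSG _ (sS j)).
    have : c^-1 \in W * E by rewrite (vmaxM mW nEG (subsetIl _ _) nEW) groupV.
    case/mulsgP => w e Ww Ee ece.
    exists e; apply/and4P; split => //.
    - by move: Ee; rewrite inE => /andP[].
    - exact: EK.
    - have -> : e * c = w^-1 by rewrite -(invgK c) ece invMg mulKVg.
      by rewrite groupV.
    - apply/negP => We; have := Wn_c j; rewrite ejW -/c => /negP; apply.
      have ec : c = e^-1 * w^-1 by rewrite -(invgK c) ece invMg.
      by rewrite ec groupM ?groupV.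
  exists x; apply/and4P; split => //; exact: EK.
pose vw (W : {group xT}) := odflt 1 [pick v | Pv W v].
have vwP : forall W, W \in X -> Pv W (vw W).
  move=> W WX; rewrite /vw; case: pickP => [v //|none].
  by have [v] := exPv W WX; rewrite none.
pose x (i : I) : xT := match i with
  | inl W => vw (val W) * (if jW (val W) is Some j then s j else 1)
  | inr j => s j end.
have Sx : forall W, (if jW W is Some j then s j else 1) \in S.
  by move=> W; case: (jW W) => [j|]; rewrite ?group1 ?sS.
have -> : #|X| + k = #|{: I}| by rewrite card_sum card_sig card_ord; congr (_ + _); apply: eq_card => W.
apply: (@MaxDim_ge _ G I M x).
- case=> [[W WX]|j] /=; first by apply: maxWS; apply: hX.
  rewrite -(conjGid (subsetP sVG _ (bV j))) maximalJ; apply: maxWS; exact: Wn_max.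
- case=> [[W WX]|j] /=; last exact: (subsetP sSG _ (sS j)).
  have /and4P[Vv _ _ _] := vwP W WX.
  by apply: groupM; [exact: (subsetP sVG) | exact: (subsetP sSG _ (Sx W))].
- case=> [[W WX]|j] [[K KX]|i] /= nii.
  + have /and4P[Vv /forall_inP vK _ _] := vwP W WX.
    rewrite memJS // ?hX //; have /implyP := vK K KX; apply.
    by apply: contraNneq nii => eKW; apply/eqP; congr inl; apply: val_inj => /=; rewrite eKW.
  + have /and4P[Vv /forall_inP vK hj _] := vwP W WX.
    rewrite memJSb ?Wn_max ?bV //.
    case eJ: (jW W) hj => [j|] hj.
      have /eqP ejW : Wn j == W by move: eJ; rewrite /jW; case: pickP => // j' h [<-].
      case: (eqVneq i j) => [->|nij]; first by rewrite ejW.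
      rewrite dd1 ?mulg1; last by rewrite eq_sym.
      have /implyP := vK _ (WnX i); apply; rewrite -ejW.
      by apply: contra nij => /eqP /Wn_inj ->.
    rewrite dd_g1 mulg1; have /implyP := vK _ (WnX i); apply.
    apply/negP => /eqP eiW; move: eJ; rewrite /jW; case: pickP => // /(_ i).
    by rewrite eiW eqxx.
  + by rewrite -[s j]mul1g memJS ?hX ?group1.
  + by rewrite -[s j]mul1g memJSb ?Wn_max ?bV ?group1 // mul1g dd1 ?group1 //.
- case=> [[W WX]|j] /=.
  + have /and4P[Vv _ _ nvW] := vwP W WX.
    by rewrite memJS ?hX.
  + by rewrite -[s j]mul1g memJSb ?Wn_max ?bV ?group1 // mul1g Wn_c.
Qed.
End Nice.
End Construct.
End Abstract.


Section Concrete.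
Variables (gT : finGroupType) (S : {group gT}) (p n : nat).
Variable rG : mx_representation 'F_p S n.
Local Notation to := ('MR rG)%gact.
Local Notation f1 := (sdpair1 to).
Local Notation f2 := (sdpair2 to).
Local Notation rVn := 'rV['F_p]_n.

Definition VV := (f1 @* [set: rVn])%G.
Definition SS := (f2 @* S)%G.
Definition GG := [set: sdprod_by to]%G.

Lemma defGG : VV ><| SS = GG.
Proof. exact: sdprod_sdpair. Qed.

Lemma abVV : abelian VV.
Proof.
apply: morphim_abelian; apply/centsP => x _ y _.
by rewrite /commute /= [x * y]addrC.
Qed.

Lemma acts_normal (K : {group rVn}) :
  [acts S, on K | to] -> (f1 @* K)%G <| GG.
Proof.
rewrite actsEsd ?subxx ?subsetT // => nKS.
apply: (norm_sub_abelian defGG abVV) => //=.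
exact: morphimS (subsetT _).
Qed.

Lemma normal_acts (K : {group rVn}) :
  (f1 @* K)%G <| GG -> [acts S, on K | to].
Proof.
move=> nKG; rewrite actsEsd ?subxx ?subsetT //.
apply: subset_trans (normal_norm nKG); exact: subsetT.
Qed.

Lemma my_astabs_rowg_repr m (A : 'M_(m, n)) : 'N(rowg A | 'MR rG) = rstabs rG A.
Proof.
apply/setP=> x /[!inE]/=; apply: andb_id2l => Gx.
apply/subsetP/idP=> nAx => [|u]; last first.
  by rewrite !inE mx_repr_actE // => Au; apply: (submx_trans (submxMr _ Au)).
apply/row_subP=> i; move/implyP: (nAx (row i A)).
by rewrite !inE row_sub mx_repr_actE //= row_mul.
Qed.

Lemma my_acts_rowg (A : 'M_n) : [acts S, on rowg A | 'MR rG] = mxmodule rG A.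
Proof. by rewrite my_astabs_rowg_repr. Qed.

Hypothesis hp' : ([pchar 'F_p]%R)^'.-group S.

Lemma MaschkeGG (K : {group sdprod_by to}) : K <| GG -> K \subset VV ->
  exists L : {group sdprod_by to}, [/\ L <| GG, L \subset VV, K :&: L = 1 & K * L = VV].
Proof.
move=> nKG sKV.
pose K0 := (f1 @*^-1 K)%G.
have eK : f1 @* K0 = K by rewrite morphpreK.
have aK0 : [acts S, on K0 | to] by apply: normal_acts; rewrite /= eK.
pose A := rowg_mx K0.
have eA : rowg A = K0 by rewrite rowg_mxK.
have modA : mxmodule rG A by have := my_acts_rowg A; rewrite eA => <-.
case: (mx_Maschke_pchar rG hp' modA (submx1 _)) => W modW defW dxAW.
have aW : [acts S, on rowg W | to] by rewrite my_acts_rowg.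
have /dprodP[_ eM _ tiAW] := dprod_rowg dxAW.
pose L0 := rowg_group W.
exists (f1 @* L0)%G; split.
- exact: acts_normal.
- exact: morphimS (subsetT _).
- by rewrite -eK -injmI ?injm_sdpair1 //= -eA tiAW morphim1.
- rewrite -eK -morphimMl ?subsetT //= -eA eM.
  by rewrite /= (eq_rowg defW) rowg1.
Qed.

Lemma MaxDim_inv_le (ws : seq {group sdprod_by to}) :
  (forall W, W \in ws -> vmax GG VV W) -> Fs VV ws (size ws) :=: 1 ->
  MaxDim_inv S to [set: rVn] <= size ws.
Proof.
move=> wsmax wscap; rewrite /MaxDim_inv; apply/bigmax_leqP => X /andP[/forall_inP hX gX].
pose Y := [set (f1 @* K)%G | K in X].
have injY : {in X &, injective (fun K : {group rVn} => (f1 @* K)%G)}.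
  move=> K L _ _ /(congr1 val) /= e; apply: val_inj => /=.
  by apply: (injm_morphim_inj (injm_sdpair1 to)); rewrite ?subsetT.
rewrite -(card_in_imset injY).
apply: (gp_bound_size defGG wsmax wscap).
  move=> K /imsetP[L LX ->]; split; last exact: morphimS (subsetT _).
  apply: acts_normal; have := hX L LX; case/maxgroupP => /andP[_ aL] _; exact: aL.
apply/gen_posP => H /imsetP[K KX ->].
have [x _ [xK nxK]] := gen_posP _ _ gX K KX.
exists (f1 x); first by rewrite mem_morphim.
split; last by rewrite /= injm_mem ?injm_sdpair1 ?subsetT ?inE.
move=> H' /imsetP[L LX ->] nLK; rewrite mem_morphim ?inE // xK //.
by apply: contraNneq nLK => ->.
Qed.

Lemma MaxDim_inv_ge (X : {set {group sdprod_by to}}) :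
  (forall W, W \in X -> vmax GG VV W) -> gen_pos VV X ->
  #|X| <= MaxDim_inv S to [set: rVn].
Proof.
move=> hX gX.
have sXV : forall K, K \in X -> K \subset VV.
  by move=> K /hX /vmaxP[_ /proper_sub].
pose X0 := [set (f1 @*^-1 K)%G | K in X].
have injX : {in X &, injective (fun K : {group sdprod_by to} => (f1 @*^-1 K)%G)}.
  move=> K L KX LX /(congr1 val) /= e; apply: val_inj => /=.
  by rewrite -(morphpreK (sXV K KX)) e morphpreK ?sXV.
rewrite -(card_in_imset injX) /MaxDim_inv.
apply: (@leq_bigmax_cond _ (fun X : {set {group rVn}} =>
   [forall H in X, [max H of K | (K \proper [set: rVn]) && [acts S, on K | to]]]
   && gen_pos [set: rVn] X) (fun X => #|X|)).
apply/andP; split.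
  apply/forall_inP => _ /imsetP[K KX ->].
  have [nKG pKV maxK] := vmaxP (hX K KX).
  have eK : f1 @* (f1 @*^-1 K) = K by rewrite morphpreK ?sXV.
  apply/maxgroupP; split.
    apply/andP; split; last by apply: normal_acts; rewrite /= eK.
    rewrite properT; apply: contra (proper_subn pKV) => /eqP e.
    by rewrite -eK /= e.
  move=> L /andP[pL aL] sKL.
  have nLG := acts_normal aL.
  have sKfL : K \subset f1 @* L by rewrite -eK morphimS.
  have [e|e] := maxK _ nLG (morphimS _ (subsetT _)) sKfL.
    by apply: val_inj; rewrite /= -e injmK ?injm_sdpair1 ?subsetT.
  case/negP: (proper_subn pL); rewrite subTset; apply/eqP.
  apply: (injm_morphim_inj (injm_sdpair1 to)); rewrite ?subsetT //.
apply/gen_posP => _ /imsetP[K KX ->].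
have [x Vx [xK nxK]] := gen_posP _ _ gX K KX.
have [y _ _ exy] := morphimP Vx; subst x.
exists y; first by rewrite inE.
split; last first.
  by apply/negP => /morphpreP[_ yK]; case/negP: nxK.
move=> _ /imsetP[L LX ->] nLK; apply/morphpreP; split; first by rewrite inE.
by apply: xK => //; apply: contraNneq nLK => ->.
Qed.


Lemma dd_sd (beta : rVn) g : g \in S ->
  dd (f1 beta) (f2 g) = f1 (beta - beta *m rG (g^-1)%g)%R.
Proof.
move=> Sg.
have e2 : (f2 g)^-1 = f2 (g^-1) by rewrite (morphV (sdpair2_morphism to) Sg).
have e1 : (f1 beta)^-1 = f1 (beta^-1) by rewrite (morphV (sdpair1_morphism to) (in_setT beta)).
have eJ : f1 (beta^-1) ^ f2 (g^-1) = f1 (to beta^-1 g^-1).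
  by rewrite sdpair_act ?in_setT ?groupV.
have eM : f1 beta * f1 (to beta^-1 g^-1) = f1 (beta * to beta^-1 g^-1).
  by rewrite (morphM (sdpair1_morphism to)) ?in_setT.
rewrite /dd -!mulgA e2 e1.
have -> : f2 g * (f1 beta^-1 * f2 g^-1) = f1 (beta^-1) ^ f2 (g^-1).
  by rewrite /conjg -e2 invgK mulgA.
rewrite eJ eM; congr (f1 _).
by rewrite /= mx_repr_actE ?groupV //= mulNmx.
Qed.

Lemma dd_sd1 (beta : rVn) g : g \in S ->
  (dd (f1 beta) (f2 g) == 1) = (beta *m rG (g^-1)%g == beta)%R.
Proof.
move=> Sg; rewrite dd_sd // morph_injm_eq1 ?injm_sdpair1 ?in_setT //.
by rewrite [_ == 1](_ : _ = (beta - beta *m rG (g^-1)%g == 0)%R) // subr_eq0 eq_sym.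
Qed.

Lemma master (k : nat) (g : 'I_k -> gT) (beta : 'I_k -> rVn) (R R' : 'I_k -> {group rVn}) :
  (forall j, g j \in S) -> (forall j, [acts S, on R j | to]) ->
  (forall j, [acts S, on R' j | to]) -> (forall j, R j :&: R' j = 1) ->
  (forall i j, i != j -> R i \subset R' j) -> (forall j, beta j \in R j) ->
  (forall i j, i != j -> (beta j *m rG ((g i)^-1)%g)%R = beta j) ->
  (forall j, (beta j *m rG ((g j)^-1)%g)%R != beta j) -> k = i_irr S ->
  MaxDim [set: sdprod_by to] = (MaxDim_inv S to [set: rVn] + i_irr S)%N.
Proof.
move=> gS aR aR' tiR sRR bR fix1 fixnt ek.
pose s j := f2 (g j); pose b j := f1 (beta j).
pose Rs j := (f1 @* R j)%G; pose Rs' j := (f1 @* R' j)%G.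
have sS' : forall j, s j \in SS by move=> j; rewrite mem_morphim.
have nR : forall j, Rs j <| GG by move=> j; apply: acts_normal.
have nR' : forall j, Rs' j <| GG by move=> j; apply: acts_normal.
have sRV : forall j, Rs j \subset VV by move=> j; apply: morphimS (subsetT _).
have sR'V : forall j, Rs' j \subset VV by move=> j; apply: morphimS (subsetT _).
have tiRs : forall j, Rs j :&: Rs' j = 1.
  by move=> j; rewrite /= -injmI ?injm_sdpair1 // tiR morphim1.
have sRRs : forall i j, i != j -> Rs i \subset Rs' j by move=> i j nij; apply: morphimS; apply: sRR.
have bRs : forall j, b j \in Rs j by move=> j; rewrite mem_morphim ?in_setT.
have dd1 : forall i j, i != j -> dd (b j) (s i) = 1.
  by move=> i j nij; apply/eqP; rewrite dd_sd1 ?fix1.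
have ddnt : forall j, dd (b j) (s j) != 1 by move=> j; rewrite dd_sd1 ?fixnt.
have [X [hX gX cX WnX]] := nice_family defGG MaschkeGG sS' nR nR' sRV sR'V tiRs sRRs bRs ddnt.
pose ws := enum X.
have hws : forall W, W \in ws -> vmax GG VV W by move=> W; rewrite mem_enum; apply: hX.
have cws : Fs VV ws (size ws) :=: 1.
  rewrite /Fs /= take_size -cX; congr (_ :&: _); apply: eq_bigl => W.
  by rewrite mem_enum.
have sws : size ws = #|X| by rewrite -cardE.
have ub := upper_bound defGG abVV hws cws.
have lb := lower_bound defGG abVV MaschkeGG sS' nR nR' sRV sR'V tiRs sRRs bRs dd1 ddnt hX gX WnX.
have eI : i_irr SS = i_irr S by apply: i_irr_injm; [apply: injm_sdpair2 | apply: subxx].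
have le1 := MaxDim_inv_le hws cws.
have ge1 := MaxDim_inv_ge hX gX.
rewrite sws eI in ub; rewrite -ek in ub *.
have eM : MaxDim_inv S to [set: rVn] = #|X|.
  by apply/eqP; rewrite eqn_leq ge1 -sws le1.
by rewrite eM; apply/eqP; rewrite eqn_leq ub lb.
Qed.
End Concrete.


Section Final.
Variables (gT : finGroupType) (p k : nat).

Definition Om := (gT * 'I_k)%type.
Definition nO := #|{: Om}|.
Definition actO (w : Om) (g : gT) : Om := (w.1 * g, w.2).

Lemma actO1 w : actO w 1 = w. Proof. by case: w => a b; rewrite /actO mulg1. Qed.
Lemma actOM w g h : actO (actO w g) h = actO w (g * h).
Proof. by rewrite /actO /= mulgA. Qed.

Definition rho (g : gT) : 'M['F_p]_nO :=
  \matrix_(i, j) ((enum_val j == actO (enum_val i) g)%:R)%R.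

Lemma rho_repr (S : {group gT}) : mx_repr S rho.
Proof.
split.
  apply/matrixP => i j; rewrite !mxE actO1 (inj_eq enum_val_inj).
  by rewrite eq_sym.
move=> x y _ _; apply/matrixP => i j; rewrite !mxE.
rewrite (bigD1 (enum_rank (actO (enum_val i) x))) //= big1 ?addr0.
  by rewrite !mxE enum_rankK eqxx mul1r actOM.
move=> l nl; rewrite !mxE.
have -> : (enum_val l == actO (enum_val i) x) = false.
  by apply/negbTE; apply: contra nl => /eqP <-; rewrite enum_valK.
by rewrite mul0r.
Qed.

Lemma rho_act (v : 'rV['F_p]_nO) g j :
  ((v *m rho g) 0 j = v 0 (enum_rank (actO (enum_val j) g^-1)))%R.
Proof.
rewrite !mxE (bigD1 (enum_rank (actO (enum_val j) g^-1))) //= big1 ?addr0.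
  by rewrite !mxE enum_rankK actOM mulVg actO1 eqxx mulr1.
move=> l nl; rewrite !mxE.
have -> : (enum_val j == actO (enum_val l) g) = false.
  apply/negbTE; apply: contra nl => /eqP ->.
  by rewrite actOM mulgV actO1 enum_valK.
by rewrite mulr0.
Qed.


Definition blockset (P : pred 'I_k) : {set 'rV['F_p]_nO} :=
  [set v : 'rV['F_p]_nO | [forall i, ~~ P (enum_val i).2 ==> (v 0 i == 0)%R]].

Lemma blockset_group P : group_set (blockset P).
Proof.
apply/group_setP; split.
  by rewrite inE; apply/forall_inP => i _; rewrite mxE.
move=> u v; rewrite !inE => /forall_inP hu /forall_inP hv.
apply/forall_inP => i hi; rewrite [u * v]/= mxE.
by rewrite (eqP (hu i hi)) (eqP (hv i hi)) addr0.
Qed.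

Canonical blockset_grp P := Group (blockset_group P).

Lemma blockset_act P (v : 'rV['F_p]_nO) g :
  (v *m rho g)%R \in blockset P = (v \in blockset P).
Proof.
rewrite !inE; apply/forall_inP/forall_inP => h i hi.
  have := h (enum_rank (actO (enum_val i) g)).
  rewrite rho_act !enum_rankK actOM mulgV actO1 enum_valK.
  by apply.
rewrite rho_act; apply: h; rewrite enum_rankK //.
Qed.

Variable H : 'I_k -> {group gT}.
Definition beta (j : 'I_k) : 'rV['F_p]_nO :=
  (\row_i (((enum_val i).1 \in H j) && ((enum_val i).2 == j))%:R)%R.

Lemma beta_block j : beta j \in blockset (pred1 j).
Proof.
rewrite inE; apply/forall_inP => i /= hi; rewrite mxE.
by rewrite (negPf hi) andbF.
Qed.

Lemma beta_fix j h : h \in H j -> (beta j *m rho h)%R = beta j.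
Proof.
move=> Hh; apply/rowP => i; rewrite rho_act !mxE enum_rankK /=.
by rewrite groupMr ?groupV.
Qed.

Lemma beta_nfix j g : g \notin H j -> (beta j *m rho g^-1)%R != beta j.
Proof.
move=> nHg; apply/negP => /eqP /rowP /(_ (enum_rank ((1 : gT), j))).
rewrite rho_act !mxE !enum_rankK /= invgK /actO /= mul1g group1 eqxx (negPf nHg).
by move/eqP; rewrite eq_sym oner_eq0.
Qed.
End Final.

Lemma Fp_p'group (gT : finGroupType) (S : {group gT}) p :
  prime p -> #|gT| < p -> ([pchar 'F_p]%R)^'.-group S.
Proof.
move=> pr lt; rewrite /pgroup pcharf'_nat.
apply/eqP => /(congr1 val); rewrite /= val_Fp_nat // modn_small.
  by move=> e; have := cardG_gt0 S; rewrite e.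
exact: leq_ltn_trans (max_card _) lt.
Qed.


(* A semi-simple S-group: V = 'rV['F_p]_n with a linear action of S given by
   the representation rG, completely reducible (mxsemisimple on the whole
   space).  V ⋊ S is MathComp's external semidirect product sdprod_by for the
   action 'MR rG of S on V. *)
Theorem proposition4p4 (gT : finGroupType) (S : {group gT}) :
  ~~ flat S ->
  exists (p n : nat) (rG : mx_representation 'F_p S n),
    [/\ prime p,
        inhabited (mxsemisimple rG 1%:M) &
        MaxDim [set: sdprod_by ('MR rG)%gact]
        = (MaxDim_inv S ('MR rG)%act [set: 'rV['F_p]_n] + i_irr S)%N].
Proof.
move=> _.
have [p ltp pr] := prime_above #|gT|.
pose PA := fun A : {set gT} => (A \subset S) && irredundant A.
have PA0 : 0 < #|PA|.
  apply/card_gt0P; exists set0; rewrite unfold_in /PA sub0set /=.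
  by apply/forall_inP => h; rewrite inE.
have [A0 PA0' eA] := eq_bigmax_cond (fun A : {set gT} => #|A|) PA0.
have /andP[sAS irrA] : PA A0 := PA0'.
have eI : i_irr S = #|A0| by rewrite /i_irr -eA.
pose k := #|A0|.
pose g (j : 'I_k) : gT := enum_val j.
have gA : forall j, g j \in A0 by move=> j; apply: enum_valP.
have ginj : injective g by apply: enum_val_inj.
pose H (j : 'I_k) := (<<A0 :\ g j>>)%G.
have gH : forall i j, i != j -> g i \in H j.
  move=> i j nij; apply: mem_gen; rewrite in_setD1 gA andbT.
  by apply: contra nij => /eqP /ginj ->.
have gnH : forall j, g j \notin H j.
  move=> j; apply/negP => gjH; move/forall_inP: irrA => /(_ (g j) (gA j)); apply/negP.
  rewrite negbK eqEsubset genS ?subD1set //= gen_subG.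
  apply/subsetP => x Ax; case: (eqVneq x (g j)) => [->|nx] //.
  by apply: mem_gen; rewrite in_setD1 nx.
have hp' := Fp_p'group S pr ltp.
pose rG := MxRepresentation (@rho_repr gT p k S).
exists p, (nO gT k), rG; split => //.
  have := mx_reducible_semisimple (mxmodule1 rG) (mx_Maschke_pchar rG hp').
  move=> cl; case: (Classical_Prop.classic (inhabited (mxsemisimple rG 1%:M))) => // ni.
  by have := cl false (fun ss => ltac:(exfalso; exact: (ni (inhabits ss)))).
pose R (j : 'I_k) := @blockset_grp gT p k (pred1 j).
pose R' (j : 'I_k) := @blockset_grp gT p k [pred i | i != j].
have actsB : forall P : pred 'I_k, [acts S, on @blockset_grp gT p k P | ('MR rG)%act].
  move=> P; apply/subsetP => a Sa; rewrite !inE Sa /=; apply/subsetP => v Bv.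
  by rewrite inE /= mx_repr_actE // blockset_act.
apply: (master hp' (g := g) (beta := @beta gT p k H) (R := R) (R' := R')).
- by move=> j; apply: (subsetP sAS); apply: gA.
- by move=> j; apply: actsB.
- by move=> j; apply: actsB.
- move=> j; apply/trivgP/subsetP => v; rewrite !inE => /andP[/forall_inP h1 /forall_inP h2].
  apply/eqP/rowP => i; rewrite mxE; case: (eqVneq (enum_val i).2 j) => e.
    by apply/eqP; apply: h2; rewrite /= e negbK.
  by apply/eqP; apply: h1; rewrite /= e.
- move=> i j nij; apply/subsetP => v; rewrite !inE => /forall_inP h.
  apply/forall_inP => l; rewrite /= negbK => /eqP e; apply: h.
  by rewrite /= e eq_sym.
- by move=> j; apply: beta_block.
- by move=> i j nij; apply: beta_fix; rewrite groupV; apply: gH.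
- by move=> j; apply: beta_nfix.
- by [].
Qed.
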